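(* Let $G$ be a compact group, $g\mapsto U_g$ an irreducible unitary representation of $G$ on a finite-dimensional Hilbert space $\mathcal{H}$, and $\mathcal{L}$ a $UU$-covariant Lindbladian on $\mathcal{H}$. Then the dynamical semigroup $\mathcal{A}_t=e^{t\mathcal{L}}$ is unital for every $t\ge0$, i.e. $\mathcal{A}_t(I)=I$, and $\mathcal{L}(I)=0$.
   Context: A Lindbladian has GKSL form and generates the CPTP semigroup $(e^{t\mathcal{L}})_{t\ge0}$. $\mathcal{L}$ is $UU$-covariant if $\mathcal{L}(U_gAU_g^\dagger)=U_g\mathcal{L}(A)U_g^\dagger$ for all operators $A$ on $\mathcal{H}$ and all $g\in G$. *)

(* Defs.v *)
From HB Require Import structures.
From mathcomp Require Import all_boot all_order all_algebra.
From mathcomp Require Import all_classical all_reals all_analysis.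
From mathcomp Require Import complex.
Set Implicit Arguments. Unset Strict Implicit. Unset Printing Implicit Defensive.
Import Order.TTheory GRing.Theory Num.Theory.
Import numFieldNormedType.Exports.
Local Open Scope classical_set_scope.
Local Open Scope ring_scope.

Section Defs.
Variable R : realType.
Local Notation C := R[i].

Definition adjmx (m n : nat) (A : 'M[C]_(m, n)) : 'M[C]_(n, m) :=
  (map_mx (fun z : C => z^*) A)^T.

Definition unitarymx (n : nat) (U : 'M[C]_n) : Prop :=
  U *m adjmx U = 1%:M /\ adjmx U *m U = 1%:M.

Definition compact_group (G : topologicalType) (mul : G -> G -> G)
    (inv : G -> G) (e : G) : Prop :=
  [/\ (forall x y z, mul x (mul y z) = mul (mul x y) z),
      (forall x, mul e x = x /\ mul x e = x) &
      (forall x, mul (inv x) x = e /\ mul x (inv x) = e)] /\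
  [/\ continuous (fun p : G * G => mul p.1 p.2),
      continuous inv,
      hausdorff_space G &
      compact [set: G]].

Definition subspace (n : nat) (W : set 'cV[C]_n) : Prop :=
  W 0 /\ (forall (a : C) (v w : 'cV[C]_n), W v -> W w -> W (a *: v + w)).

Definition unitary_rep (G : topologicalType) (mul : G -> G -> G) (e : G)
    (n : nat) (U : G -> 'M[C]_n) : Prop :=
  [/\ (forall g h, U (mul g h) = U g *m U h),
      U e = 1%:M,
      (forall g, unitarymx (U g)) &
      continuous (U : G -> ('M[C]_n : normedModType C))].

Definition irreducible_rep (G : Type) (n : nat) (U : G -> 'M[C]_n) : Prop :=
  (0 < n)%N /\
  forall W : set 'cV[C]_n, subspace W ->
    (forall g v, W v -> W (U g *m v)) ->
    W = [set 0] \/ W = [set: 'cV[C]_n].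

(* GKSL (Lindblad) generator with Hamiltonian H and jump operators V k
   (Schroedinger picture):
   L(A) = -i[H,A] + sum_k (V_k A V_k^* - 1/2 {V_k^* V_k, A}) *)
Definition gksl (n m : nat) (H : 'M[C]_n) (V : 'I_m -> 'M[C]_n)
    (A : 'M[C]_n) : 'M[C]_n :=
  - 'i *: (H *m A - A *m H) +
  \sum_(k < m) (V k *m A *m adjmx (V k)
                - 2^-1 *: (adjmx (V k) *m V k *m A + A *m (adjmx (V k) *m V k))).

Definition lindbladian (n : nat) (L : 'M[C]_n -> 'M[C]_n) : Prop :=
  exists (m : nat) (H : 'M[C]_n) (V : 'I_m -> 'M[C]_n),
    adjmx H = H /\ forall A, L A = gksl H V A.

Definition UU_covariant (G : Type) (n : nat) (U : G -> 'M[C]_n)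
    (L : 'M[C]_n -> 'M[C]_n) : Prop :=
  forall g A, L (U g *m A *m adjmx (U g)) = U g *m L A *m adjmx (U g).

Definition sop_exp (n : nat) (L : 'M[C]_n -> 'M[C]_n) (t : R)
    (A : 'M[C]_n) : 'M[C]_n :=
  lim ((series (fun k : nat => (real_complex R (t ^+ k / (k`!)%:R) : C) *: iter k L A))
         @ \oo).

End Defs.

(* Main.v *)
Require Import Defs.
From HB Require Import structures.
From mathcomp Require Import all_boot all_order all_algebra.
From mathcomp Require Import all_classical all_reals all_analysis.
From mathcomp Require Import complex.
Import Order.TTheory GRing.Theory Num.Theory.
Import numFieldNormedType.Exports.
Local Open Scope classical_set_scope.
Local Open Scope ring_scope.

Lemma gksl_trace1 (R : realType) (n m : nat) (H : 'M[R[i]]_n) (V : 'I_m -> 'M[R[i]]_n) :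
  \tr (gksl H V 1%:M) = 0.
Proof.
rewrite /gksl !mulmx1 !mul1mx subrr scaler0 add0r.
rewrite raddf_sum /= big1 // => k _.
rewrite raddfB /= linearZ /= raddfD /= mxtrace_mulC.
rewrite !mulmx1 !mul1mx mulrDr (mulrC 2^-1) -splitr; exact: subrr.
Qed.

Lemma gksl0 (R : realType) (n m : nat) (H : 'M[R[i]]_n) (V : 'I_m -> 'M[R[i]]_n) :
  gksl H V 0 = 0.
Proof.
rewrite /gksl !mulmx0 !mul0mx subr0 scaler0 add0r big1 // => k _.
by rewrite mul0mx !mulmx0 mul0mx addr0 scaler0 subr0.
Qed.

Theorem lemma6 (R : realType) (G : topologicalType) (mul : G -> G -> G)
    (inv : G -> G) (e : G) (n : nat) (U : G -> 'M[R[i]]_n)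
    (L : 'M[R[i]]_n -> 'M[R[i]]_n) :
  compact_group mul inv e ->
  unitary_rep mul e U ->
  irreducible_rep U ->
  lindbladian L ->
  UU_covariant U L ->
  (forall t : R, 0 <= t -> sop_exp L t 1%:M = 1%:M) /\ L 1%:M = 0.
Proof.
move=> _ [_ _ Uu _] [n0 irr] [m [H [V [_ HL]]]] cov.
set M := L 1%:M.
have comm g : M *m U g = U g *m M.
  have := cov g 1%:M; rewrite mulmx1 (proj1 (Uu g)) -/M => E.
  by rewrite {1}E -!mulmxA (proj2 (Uu g)) mulmx1.
have [lam] : exists lam, root (char_poly M^T) lam.
  by apply/closed_rootP; rewrite size_char_poly -(subnKC n0).
rewrite -eigenvalue_root_char => /eigenvalueP [w Hw w0].
pose W := [set v : 'cV[R[i]]_n | M *m v = lam *: v].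
have sW : Defs.subspace W.
  split; first by rewrite /W /= mulmx0 scaler0.
  move=> a v u; rewrite /W /= => Hv Hu.
  by rewrite mulmxDr -scalemxAr Hv Hu scalerDr !scalerA mulrC.
have iW : forall g v, W v -> W (U g *m v).
  move=> g v; rewrite /W /= => Hv.
  by rewrite mulmxA comm -mulmxA Hv scalemxAr.
have Mlam : M = lam%:M.
  have Wt : W = setT.
    case: (irr W sW iW) => // W0.
    have : W w^T by rewrite /W /= -[M]trmxK -trmx_mul Hw linearZ.
    rewrite W0 /= => /eqP; rewrite -trmx0 (inj_eq trmx_inj) => /eqP w0'.
    by rewrite w0' eqxx in w0.
  apply/matrixP => i j.
  have : W (delta_mx j 0) by rewrite Wt.
  rewrite /W /= -colE => /matrixP /(_ i 0).
  by rewrite !mxE => ->; rewrite eqxx andbT mulr_natr.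
have L1 : M = 0.
  have := @gksl_trace1 _ _ _ H V; rewrite -HL -/M Mlam mxtrace_scalar => /eqP.
  rewrite mulrn_eq0 => /orP [/eqP n00|/eqP ->]; last by apply/matrixP => i j; rewrite !mxE mul0rn.
  by rewrite n00 in n0.
have iterL k : iter k.+1 L 1%:M = 0.
  elim: k => [|k IH] /=; first exact: L1.
  by rewrite /= in IH; rewrite IH HL gksl0.
split=> // t _.
rewrite /sop_exp; apply: norm_lim_near_cst.
exists 1%N => // k /= hk.
case: k hk => // k _.
rewrite /series /= big_nat_recl // big1 => [|j _]; last by rewrite iterL scaler0.
rewrite addr0 expr0 fact0 divr1 /=.
have -> : (real_complex R 1 : R[i]) = 1 by [].
by rewrite scale1r.
Qed.
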